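(* There exists $\varepsilon_0>0$ such that for every $\varepsilon\in(0,\varepsilon_0)$ the following holds. Let $\mathbf{U}$ be the $7\times 7$ matrix $$\mathbf{U}=\begin{pmatrix} 0 & -1 & \varepsilon & -10 & -\tfrac13+\varepsilon & -\tfrac13+\varepsilon & -\tfrac13+\varepsilon\\ \varepsilon & 0 & -1 & -10 & -\tfrac13+\varepsilon & -\tfrac13+\varepsilon & -\tfrac13+\varepsilon\\ -1 & \varepsilon & 0 & -10 & -\tfrac13+\varepsilon & -\tfrac13+\varepsilon & -\tfrac13+\varepsilon\\ -2 & -2 & 2 & 0 & -\tfrac13 & -\tfrac13 & -\tfrac13\\ -\tfrac13 & -\tfrac13 & -\tfrac13 & 10 & 0 & -1 & \varepsilon\\ -\tfrac13 & -\tfrac13 & -\tfrac13 & 10 & \varepsilon & 0 & -1\\ -\tfrac13 & -\tfrac13 & -\tfrac13 & 10 & -1 & \varepsilon & 0 \end{pmatrix}.$$ Then the set $\Gamma_{567}=\{\mathbf{x}\in S_7: x_5+x_6+x_7=1 \text{ and } x_5x_6x_7=0\}$ is asymptotically stable for the replicator dynamics $\dot x_i=x_i[(\mathbf{U}\mathbf{x})_i-\mathbf{x}\cdot\mathbf{U}\mathbf{x}]$, $i=1,\dots,7$, on $S_7$.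
   Context: $S_7=\{\mathbf{x}\in\mathbb{R}_+^7:\sum_i x_i=1\}$, which is invariant under the replicator dynamics. A compact invariant set is asymptotically stable if it is Lyapunov stable (every neighborhood contains a neighborhood whose forward orbits stay in the first) and attracting (all solutions starting in some neighborhood converge to it). The paper assumes throughout that $\varepsilon>0$ is ''small enough''. *)

(* Defs.v *)
From Stdlib Require Import Reals Lra.
From Coquelicot Require Import Coquelicot.
Open Scope R_scope.

(* Vectors of R^7 are represented as functions nat -> R; only indices
   0..6 are relevant (paper index i corresponds to Rocq index i-1). *)

Definition Umat (eps : R) (i j : nat) : R :=
  match i, j with
  | 0%nat, 0%nat => 0 | 0%nat, 1%nat => -1 | 0%nat, 2%nat => eps
  | 0%nat, 3%nat => -10
  | 0%nat, _ => -1/3 + eps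
  | 1%nat, 0%nat => eps | 1%nat, 1%nat => 0 | 1%nat, 2%nat => -1
  | 1%nat, 3%nat => -10
  | 1%nat, _ => -1/3 + eps
  | 2%nat, 0%nat => -1 | 2%nat, 1%nat => eps | 2%nat, 2%nat => 0
  | 2%nat, 3%nat => -10
  | 2%nat, _ => -1/3 + eps
  | 3%nat, 0%nat => -2 | 3%nat, 1%nat => -2 | 3%nat, 2%nat => 2
  | 3%nat, 3%nat => 0
  | 3%nat, _ => -1/3
  | 4%nat, 3%nat => 10
  | 4%nat, 4%nat => 0 | 4%nat, 5%nat => -1 | 4%nat, 6%nat => eps
  | 4%nat, _ => -1/3
  | 5%nat, 3%nat => 10
  | 5%nat, 4%nat => eps | 5%nat, 5%nat => 0 | 5%nat, 6%nat => -1
  | 5%nat, _ => -1/3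
  | 6%nat, 3%nat => 10
  | 6%nat, 4%nat => -1 | 6%nat, 5%nat => eps | 6%nat, 6%nat => 0
  | 6%nat, _ => -1/3
  | _, _ => 0
  end.

Definition Ux (eps : R) (x : nat -> R) (i : nat) : R :=
  sum_f_R0 (fun j => Umat eps i j * x j) 6.

Definition avg_payoff (eps : R) (x : nat -> R) : R :=
  sum_f_R0 (fun i => x i * Ux eps x i) 6.

Definition replicator (eps : R) (x : nat -> R) (i : nat) : R :=
  x i * (Ux eps x i - avg_payoff eps x).

Definition simplex7 (x : nat -> R) : Prop :=
  (forall i, (i < 7)%nat -> 0 <= x i) /\ sum_f_R0 x 6 = 1.

Definition Gamma567 (x : nat -> R) : Prop :=
  simplex7 x /\ x 4%nat + x 5%nat + x 6%nat = 1 /\ x 4%nat * x 5%nat * x 6%nat = 0.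

Definition dist7 (x y : nat -> R) : R :=
  sqrt (sum_f_R0 (fun i => (x i - y i)^2) 6).

Definition nbhd_in_S7 (A N : (nat -> R) -> Prop) : Prop :=
  forall y, A y -> exists r, 0 < r /\
    forall z, simplex7 z -> dist7 y z < r -> N z.

Definition replicator_solution (eps : R) (x : R -> nat -> R) : Prop :=
  (forall t, 0 < t -> forall i, (i < 7)%nat ->
     is_derive (fun s => x s i) t (replicator eps (x t) i)) /\
  (forall i, (i < 7)%nat ->
     filterlim (fun s => x s i) (at_right 0) (locally (x 0 i))).

Definition lyapunov_stable (eps : R) (A : (nat -> R) -> Prop) : Prop :=
  forall V, nbhd_in_S7 A V ->
    exists W, nbhd_in_S7 A W /\
      (forall z, simplex7 z -> W z -> V z) /\
      forall x, replicator_solution eps x -> simplex7 (x 0) -> W (x 0) ->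
        forall t, 0 <= t -> V (x t).

Definition converges_to_set (x : R -> nat -> R) (A : (nat -> R) -> Prop) : Prop :=
  forall e, 0 < e -> exists T, forall t, T <= t ->
    exists y, A y /\ dist7 (x t) y < e.

Definition attracting (eps : R) (A : (nat -> R) -> Prop) : Prop :=
  exists W, nbhd_in_S7 A W /\
    forall x, replicator_solution eps x -> simplex7 (x 0) -> W (x 0) ->
      converges_to_set x A.

Definition asymptotically_stable (eps : R) (A : (nat -> R) -> Prop) : Prop :=
  lyapunov_stable eps A /\ attracting eps A.

(* Main.v *)
Require Import Defs.
From Stdlib Require Import Reals.
From Coquelicot Require Import Coquelicot.
From Stdlib Require Import Lra Psatz Classical IndefiniteDescription.
Open Scope R_scope.

Lemma ball_R (x e y : R) : ball x e y <-> Rabs (y - x) < e.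
Proof. reflexivity. Qed.

Lemma ball_R2 (x e y : R) : ball x e y -> x - e < y < x + e.
Proof. intros H. change (Rabs (y - x) < e) in H. apply Rabs_def2 in H. lra. Qed.

Lemma fl_plus {T} (F : (T->Prop)->Prop) {FF : Filter F} (f g : T -> R) (a b : R) :
  filterlim f F (locally a) -> filterlim g F (locally b) ->
  filterlim (fun s => f s + g s) F (locally (a+b)).
Proof. intros Hf Hg. exact (filterlim_comp_2 f g Rplus Hf Hg (filterlim_plus a b)). Qed.

Lemma fl_mult {T} (F : (T->Prop)->Prop) {FF : Filter F} (f g : T -> R) (a b : R) :
  filterlim f F (locally a) -> filterlim g F (locally b) ->
  filterlim (fun s => f s * g s) F (locally (a*b)).
Proof. intros Hf Hg. exact (filterlim_comp_2 f g Rmult Hf Hg (filterlim_mult a b)). Qed.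

Lemma fl_opp {T} (F : (T->Prop)->Prop) {FF : Filter F} (f : T -> R) (a : R) :
  filterlim f F (locally a) -> filterlim (fun s => - f s) F (locally (-a)).
Proof. intros Hf. exact (filterlim_comp _ _ _ f Ropp F _ _ Hf (filterlim_opp a)). Qed.

Lemma fl_const {T} (F : (T->Prop)->Prop) {FF : Filter F} (a : R) :
  filterlim (fun _ => a) F (locally a).
Proof. apply filterlim_const. Qed.

Lemma fl_exp {T} (F : (T->Prop)->Prop) {FF : Filter F} (f : T -> R) (a : R) :
  filterlim f F (locally a) -> filterlim (fun s => exp (f s)) F (locally (exp a)).
Proof. intros Hf. apply (filterlim_comp _ _ _ f exp F _ _ Hf).
  apply (ex_derive_continuous exp a). eexists. apply is_derive_exp. Qed.

Lemma fl_le {T} (F : (T->Prop)->Prop) {FF : ProperFilter F} (h : T -> R) (l : R) :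
  filterlim h F (locally l) -> F (fun s => h s <= 0) -> l <= 0.
Proof.
  intros Hh Hle. destruct (Rle_or_lt l 0) as [?|Hl]; auto. exfalso.
  apply filterlim_locally with (eps := mkposreal (l/2) ltac:(lra)) in Hh.
  destruct (filter_ex _ (filter_and _ _ Hh Hle)) as [s [H1 H2]].
  apply ball_R2 in H1; cbn [pos] in H1. lra.
Qed.

Lemma at_left_pos T : 0 < T -> at_left T (fun s => 0 <= s < T).
Proof. intros HT. unfold at_left, within, locally. exists (mkposreal T HT). intros y Hy Hlt. apply ball_R2 in Hy; cbn [pos] in Hy. lra. Qed.

Lemma at_right_lt T d : 0 < d -> at_right T (fun s => T < s < T + d).
Proof. intros Hd. unfold at_right, within, locally. exists (mkposreal d Hd). intros y Hy Hlt. apply ball_R2 in Hy; cbn [pos] in Hy. lra. Qed.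

Lemma at_right_ex T (P : R -> Prop) : at_right T P -> exists d, 0 < d /\ forall s, T < s < T + d -> P s.
Proof. intros [e He]. exists e. split. apply cond_pos. intros s Hs. apply He. apply ball_R.
  apply Rabs_def1; lra. lra. Qed.

Lemma deriv_cont (f : R -> R) t l : is_derive f t l -> filterlim f (locally t) (locally (f t)).
Proof. intros H. apply (ex_derive_continuous f t). eexists; eauto. Qed.

Lemma loc_right (f : R -> R) t l : filterlim f (locally t) l -> filterlim f (at_right t) l.
Proof. intros H. eapply filterlim_filter_le_1. 2: exact H. apply filter_le_within. Qed.

Lemma loc_left (f : R -> R) t l : filterlim f (locally t) l -> filterlim f (at_left t) l.
Proof. intros H. eapply filterlim_filter_le_1. 2: exact H. apply filter_le_within. Qed.

Lemma closed_left (h : R -> R) T l : 0 < T -> filterlim h (locally T) (locally l) ->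
  (forall s, 0 <= s < T -> h s <= 0) -> l <= 0.
Proof. intros HT Hh Hs. apply (fl_le (at_left T) h l). now apply loc_left.
  eapply filter_imp. 2: apply at_left_pos, HT. intros; auto. Qed.

Lemma P_bound_min (p q r : R) : 0 <= r -> r <= p -> r <= q -> p + q + r <= 1 ->
  p*q*r <= 1/10000 -> p*q + q*r + r*p <= 3/10.
Proof.
  intros Hr Hp Hq Hs Hprod.
  destruct (Rle_or_lt r (1/20)) as [Hr1|Hr1].
  - assert (0 <= (p-q)^2) by apply pow2_ge_0. assert (p*q <= (p+q)^2/4) by nra.
    assert (0 <= p+q <= 1) by lra. assert ((p+q)^2 <= 1) by nra.
    assert (1-(p+q) >= 0) by lra. assert (r*(1-(p+q)) >= 0) by nra. nra.
  - exfalso. assert (p*q >= r*r) by nra. assert (p*q*r >= r*r*r) by nra. nra.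
Qed.

Lemma P_bound (p q r : R) : 0 <= p -> 0 <= q -> 0 <= r -> p + q + r <= 1 ->
  p*q*r <= 1/10000 -> p*q + q*r + r*p <= 3/10.
Proof.
  intros Hp Hq Hr Hs Hprod.
  destruct (Rle_or_lt r p); destruct (Rle_or_lt r q); destruct (Rle_or_lt p q).
  all: first [ apply P_bound_min; lra
             | replace (p*q+q*r+r*p) with (q*r+r*p+p*q) by ring; apply P_bound_min; nra
             | replace (p*q+q*r+r*p) with (r*p+p*q+q*r) by ring; apply P_bound_min; nra ].
Qed.

Lemma core (eps a b c d p q r : R) : 0 < eps <= 1/200 ->
  0 <= a -> 0 <= b -> 0 <= c -> 0 <= d -> 0 <= p -> 0 <= q -> 0 <= r ->
  a+b+c+d+p+q+r = 1 -> a+b+c+d+p*q*r < 1/10000 ->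
  let F := p+q+r in
  let U0 := -b + eps*c - 10*d + (-1/3+eps)*F in
  let U1 := eps*a - c - 10*d + (-1/3+eps)*F in
  let U2 := -a + eps*b - 10*d + (-1/3+eps)*F in
  let U3 := -2*a - 2*b + 2*c - 1/3*F in
  let U4 := -1/3*(a+b+c) + 10*d - q + eps*r in
  let U5 := -1/3*(a+b+c) + 10*d + eps*p - r in
  let U6 := -1/3*(a+b+c) + 10*d - p + eps*q in
  let av := a*U0+b*U1+c*U2+d*U3+p*U4+q*U5+r*U6 in
  U0 - av <= -1/50 /\ U1 - av <= -1/50 /\ U2 - av <= -1/50 /\ U3 - av <= -1/50 /\
  U4+U5+U6 - 3*av <= -1/50.
Proof.
  intros He Ha Hb Hc Hd Hp Hq Hr Hs HL F U0 U1 U2 U3 U4 U5 U6 av.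
  assert (Hpqr : p*U4+q*U5+r*U6 = -(1-eps)*(p*q+q*r+r*p) + F*(10*d - 1/3*(a+b+c))).
  { unfold U4, U5, U6, F. field. }
  assert (HS : U4+U5+U6 = -(a+b+c) + 30*d - (1-eps)*F) by (unfold U4,U5,U6,F; field).
  assert (E0 : U0 = -b + eps*c - 10*d + (-1/3+eps)*F) by reflexivity.
  assert (E1 : U1 = eps*a - c - 10*d + (-1/3+eps)*F) by reflexivity.
  assert (E2 : U2 = -a + eps*b - 10*d + (-1/3+eps)*F) by reflexivity.
  assert (E3 : U3 = -2*a - 2*b + 2*c - 1/3*F) by reflexivity.
  assert (Eav : av = a*U0+b*U1+c*U2+d*U3+(p*U4+q*U5+r*U6)) by (unfold av; ring).
  assert (EF : F = p + q + r) by reflexivity.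
  assert (Ed : (-1/3+eps)*F = -1/3*F + eps*F) by field.
  clearbody av U0 U1 U2 U3 U4 U5 U6 F.
  set (m := a+b+c+d).
  assert (H0pqr : 0 <= p*q*r) by (apply Rmult_le_pos; [apply Rmult_le_pos|]; lra).
  assert (Hm : m < 1/10000) by (unfold m; lra).
  assert (0 <= m) by (unfold m; lra).
  assert (HF : F = 1 - m) by (unfold m; lra).
  assert (HP : p*q + q*r + r*p <= 3/10).
  { apply P_bound; lra. }
  assert (HP0 : 0 <= p*q + q*r + r*p).
  { assert (0 <= p*q) by (apply Rmult_le_pos; lra). assert (0 <= q*r) by (apply Rmult_le_pos; lra).
    assert (0 <= r*p) by (apply Rmult_le_pos; lra). lra. }
  assert (HeF : 0 <= eps*F) by (apply Rmult_le_pos; lra).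
  assert (HeF1 : eps*F <= eps) by (rewrite HF; assert (eps*m >= 0) by (apply Rle_ge, Rmult_le_pos; lra);
     replace (eps*(1-m)) with (eps - eps*m) by ring; lra).
  assert (Hea : 0 <= eps*a) by (apply Rmult_le_pos; lra).
  assert (Heb : 0 <= eps*b) by (apply Rmult_le_pos; lra).
  assert (Hec : 0 <= eps*c) by (apply Rmult_le_pos; lra).
  assert (Hea1 : eps*a <= eps*m) by (apply Rmult_le_compat_l; unfold m; lra).
  assert (Heb1 : eps*b <= eps*m) by (apply Rmult_le_compat_l; unfold m; lra).
  assert (Hec1 : eps*c <= eps*m) by (apply Rmult_le_compat_l; unfold m; lra).
  assert (Hem : eps*m + eps*F <= 1/200).
  { replace (eps*m+eps*F) with (eps*(m+F)) by ring. rewrite HF. replace (m + (1-m)) with 1 by ring. lra. }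
  assert (HU0 : U0 >= -1/2).
  { rewrite E0, Ed. unfold m in Hm. lra. }
  assert (HU1 : U1 >= -1/2).
  { rewrite E1, Ed. unfold m in Hm. lra. }
  assert (HU2 : U2 >= -1/2).
  { rewrite E2, Ed. unfold m in Hm. lra. }
  assert (HU3 : U3 >= -1/2).
  { rewrite E3. unfold m in Hm. lra. }
  assert (HF01 : 0 <= F <= 1) by lra.
  assert (Hpqr2 : p*U4+q*U5+r*U6 >= -(1-eps)*(p*q+q*r+r*p) - m/3).
  { rewrite Hpqr. replace (F*(10*d - 1/3*(a+b+c))) with (10*(F*d) - 1/3*(F*(a+b+c))) by ring.
    assert (0 <= F*d) by (apply Rmult_le_pos; lra).
    assert (F*(a+b+c) <= a+b+c).
    { assert (0 <= (1-F)*(a+b+c)) by (apply Rmult_le_pos; lra).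
      replace ((1-F)*(a+b+c)) with ((a+b+c) - F*(a+b+c)) in * by ring. lra. }
    unfold m. lra. }
  assert (Hprod : forall u U, 0 <= u -> U >= -1/2 -> u*U >= -u/2).
  { intros u U Hu HU. assert (0 <= u*(U+1/2)) by (apply Rmult_le_pos; lra).
    replace (u*(U+1/2)) with (u*U + u/2) in * by field. lra. }
  assert (Hav : av >= -(1-eps)*(p*q+q*r+r*p) - 5/6*m).
  { rewrite Eav. pose proof (Hprod a U0 Ha HU0). pose proof (Hprod b U1 Hb HU1).
    pose proof (Hprod c U2 Hc HU2). pose proof (Hprod d U3 Hd HU3). unfold m in *. lra. }
  assert (HepsP : (1-eps)*(p*q+q*r+r*p) <= 3/10).
  { replace ((1-eps)*(p*q+q*r+r*p)) with ((p*q+q*r+r*p) - eps*(p*q+q*r+r*p)) by ring.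
    assert (0 <= eps*(p*q+q*r+r*p)) by (apply Rmult_le_pos; lra). lra. }
  repeat split.
  - rewrite E0, Ed. unfold m in *. lra.
  - rewrite E1, Ed. unfold m in *. lra.
  - rewrite E2, Ed. unfold m in *. lra.
  - rewrite E3. unfold m in *. lra.
  - rewrite HS. assert ((1-eps)*(F - 3*(p*q+q*r+r*p)) >= (1-1/200)*(1/10 - m)).
    { assert (HA : F - 3*(p*q+q*r+r*p) >= 1/10 - m) by lra.
      apply Rle_ge. apply Rmult_le_compat; lra. }
    replace ((1-eps)*(F - 3*(p*q+q*r+r*p))) with ((1-eps)*F - 3*((1-eps)*(p*q+q*r+r*p))) in * by ring.
    unfold m in *. lra.
Qed.

Definition Lf (x : nat -> R) := x 0%nat + x 1%nat + x 2%nat + x 3%nat + x 4%nat * x 5%nat * x 6%nat.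

Lemma Ux0 eps x : Ux eps x 0 = - x 1%nat + eps * x 2%nat - 10 * x 3%nat + (-1/3+eps)*(x 4%nat + x 5%nat + x 6%nat).
Proof. unfold Ux; simpl. field. Qed.
Lemma Ux1 eps x : Ux eps x 1 = eps * x 0%nat - x 2%nat - 10 * x 3%nat + (-1/3+eps)*(x 4%nat + x 5%nat + x 6%nat).
Proof. unfold Ux; simpl. field. Qed.
Lemma Ux2 eps x : Ux eps x 2 = - x 0%nat + eps * x 1%nat - 10 * x 3%nat + (-1/3+eps)*(x 4%nat + x 5%nat + x 6%nat).
Proof. unfold Ux; simpl. field. Qed.
Lemma Ux3 eps x : Ux eps x 3 = -2 * x 0%nat - 2 * x 1%nat + 2 * x 2%nat - 1/3*(x 4%nat + x 5%nat + x 6%nat).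
Proof. unfold Ux; simpl. field. Qed.
Lemma Ux4 eps x : Ux eps x 4 = -1/3*(x 0%nat + x 1%nat + x 2%nat) + 10 * x 3%nat - x 5%nat + eps * x 6%nat.
Proof. unfold Ux; simpl. field. Qed.
Lemma Ux5 eps x : Ux eps x 5 = -1/3*(x 0%nat + x 1%nat + x 2%nat) + 10 * x 3%nat + eps * x 4%nat - x 6%nat.
Proof. unfold Ux; simpl. field. Qed.
Lemma Ux6 eps x : Ux eps x 6 = -1/3*(x 0%nat + x 1%nat + x 2%nat) + 10 * x 3%nat - x 4%nat + eps * x 5%nat.
Proof. unfold Ux; simpl. field. Qed.
Lemma avg_expl eps x : avg_payoff eps x = x 0%nat * Ux eps x 0 + x 1%nat * Ux eps x 1 + x 2%nat * Ux eps x 2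
  + x 3%nat * Ux eps x 3 + x 4%nat * Ux eps x 4 + x 5%nat * Ux eps x 5 + x 6%nat * Ux eps x 6.
Proof. unfold avg_payoff; simpl. ring. Qed.

Lemma simplex_expl x : simplex7 x ->
  0 <= x 0%nat /\ 0 <= x 1%nat /\ 0 <= x 2%nat /\ 0 <= x 3%nat /\ 0 <= x 4%nat /\ 0 <= x 5%nat /\ 0 <= x 6%nat /\
  x 0%nat + x 1%nat + x 2%nat + x 3%nat + x 4%nat + x 5%nat + x 6%nat = 1.
Proof. intros [Hn Hs]. simpl in Hs. repeat split; try (apply Hn; lia). lra. Qed.

Lemma rates eps x : 0 < eps <= 1/200 -> simplex7 x -> Lf x < 1/10000 ->
  (forall i, (i < 4)%nat -> Ux eps x i - avg_payoff eps x <= -1/50) /\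
  Ux eps x 4 + Ux eps x 5 + Ux eps x 6 - 3 * avg_payoff eps x <= -1/50.
Proof.
  intros He Hx HL. destruct (simplex_expl x Hx) as (H0&H1&H2&H3&H4&H5&H6&Hs).
  unfold Lf in HL.
  pose proof (core eps _ _ _ _ _ _ _ He H0 H1 H2 H3 H4 H5 H6 Hs HL) as C. cbv zeta in C.
  rewrite avg_expl. rewrite Ux0, Ux1, Ux2, Ux3, Ux4, Ux5, Ux6.
  destruct C as (C0&C1&C2&C3&C4). split; [|exact C4].
  intros i Hi. destruct i as [|[|[|[|i]]]]; try lia.
  - rewrite Ux0; exact C0.
  - rewrite Ux1; exact C1.
  - rewrite Ux2; exact C2.
  - rewrite Ux3; exact C3.
Qed.

Lemma L_decay eps x : 0 < eps <= 1/200 -> simplex7 x -> Lf x < 1/10000 ->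
  let g i := Ux eps x i - avg_payoff eps x in
  x 0%nat * g 0%nat + x 1%nat * g 1%nat + x 2%nat * g 2%nat + x 3%nat * g 3%nat
   + x 4%nat * x 5%nat * x 6%nat * (g 4%nat + g 5%nat + g 6%nat) <= -(1/50) * Lf x.
Proof.
  intros He Hx HL g. destruct (rates eps x He Hx HL) as [R1 R2].
  destruct (simplex_expl x Hx) as (H0&H1&H2&H3&H4&H5&H6&Hs).
  assert (Hm : forall u v, 0 <= u -> v <= -1/50 -> u * v <= -(1/50)*u).
  { intros u v Hu Hv. assert (0 <= u * (-1/50 - v)) by (apply Rmult_le_pos; lra).
    replace (u*(-1/50-v)) with (-(1/50)*u - u*v) in * by field. lra. }
  pose proof (Hm _ _ H0 (R1 0%nat ltac:(lia))). pose proof (Hm _ _ H1 (R1 1%nat ltac:(lia))).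
  pose proof (Hm _ _ H2 (R1 2%nat ltac:(lia))). pose proof (Hm _ _ H3 (R1 3%nat ltac:(lia))).
  assert (Hp : 0 <= x 4%nat * x 5%nat * x 6%nat) by (apply Rmult_le_pos; [apply Rmult_le_pos|]; lra).
  assert (Hg : g 4%nat + g 5%nat + g 6%nat <= -1/50) by (unfold g; lra).
  pose proof (Hm _ _ Hp Hg). unfold g in *. unfold Lf. lra.
Qed.

Definition sq7 (y z : nat -> R) := sum_f_R0 (fun i => (y i - z i)^2) 6.

Lemma sq7_expl y z : sq7 y z = (y 0%nat - z 0%nat)^2 + (y 1%nat - z 1%nat)^2 + (y 2%nat - z 2%nat)^2
  + (y 3%nat - z 3%nat)^2 + (y 4%nat - z 4%nat)^2 + (y 5%nat - z 5%nat)^2 + (y 6%nat - z 6%nat)^2.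
Proof. reflexivity. Qed.

Lemma sq7_nonneg y z : 0 <= sq7 y z.
Proof. rewrite sq7_expl. repeat match goal with |- context [(?a - ?b)^2] =>
  assert (0 <= (a-b)^2) by apply pow2_ge_0; fail end. 
  pose proof (pow2_ge_0 (y 0%nat - z 0%nat)). pose proof (pow2_ge_0 (y 1%nat - z 1%nat)).
  pose proof (pow2_ge_0 (y 2%nat - z 2%nat)). pose proof (pow2_ge_0 (y 3%nat - z 3%nat)).
  pose proof (pow2_ge_0 (y 4%nat - z 4%nat)). pose proof (pow2_ge_0 (y 5%nat - z 5%nat)).
  pose proof (pow2_ge_0 (y 6%nat - z 6%nat)). lra. Qed.

Lemma sq7_sym y z : sq7 y z = sq7 z y.
Proof. rewrite !sq7_expl. ring. Qed.

Lemma sq7_tri u v w : sq7 u w <= 2 * sq7 v w + 2 * sq7 u v.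
Proof. rewrite !sq7_expl.
  assert (H : forall a b c : R, (a - c)^2 <= 2*(b-c)^2 + 2*(a-b)^2).
  { intros a b c. pose proof (pow2_ge_0 (a - 2*b + c)). nra. }
  pose proof (H (u 0%nat) (v 0%nat) (w 0%nat)). pose proof (H (u 1%nat) (v 1%nat) (w 1%nat)).
  pose proof (H (u 2%nat) (v 2%nat) (w 2%nat)). pose proof (H (u 3%nat) (v 3%nat) (w 3%nat)).
  pose proof (H (u 4%nat) (v 4%nat) (w 4%nat)). pose proof (H (u 5%nat) (v 5%nat) (w 5%nat)).
  pose proof (H (u 6%nat) (v 6%nat) (w 6%nat)). lra. Qed.

Lemma dist_of_sq y z r : 0 < r -> sq7 y z < r^2 -> dist7 y z < r.
Proof. intros Hr H. unfold dist7. fold (sq7 y z).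
  rewrite <- (sqrt_pow2 r) by lra. apply sqrt_lt_1_alt. split; [apply sq7_nonneg|exact H]. Qed.

Lemma sq_of_dist y z r : dist7 y z < r -> sq7 y z < r^2.
Proof. intros H. unfold dist7 in H. fold (sq7 y z) in H.
  pose proof (sq7_nonneg y z). pose proof (sqrt_pos (sq7 y z)).
  rewrite <- (sqrt_sqrt (sq7 y z)) by lra. nra. Qed.

Lemma Gamma_expl y : Gamma567 y -> y 0%nat = 0 /\ y 1%nat = 0 /\ y 2%nat = 0 /\ y 3%nat = 0 /\
  0 <= y 4%nat /\ 0 <= y 5%nat /\ 0 <= y 6%nat /\ y 4%nat + y 5%nat + y 6%nat = 1 /\
  (y 4%nat = 0 \/ y 5%nat = 0 \/ y 6%nat = 0).
Proof. intros [Hs [H1 H2]]. destruct (simplex_expl y Hs) as (H0&Ha&Hb&Hc&Hd&He&Hf&Hsum).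
  repeat split; try lra.
  apply Rmult_integral in H2. destruct H2 as [H2|H2]. apply Rmult_integral in H2. tauto. tauto. Qed.

Lemma W_nbhd eta : 0 < eta <= 1 -> nbhd_in_S7 Gamma567 (fun z => simplex7 z /\ Lf z < eta).
Proof.
  intros He y Hy. exists (eta/5). split; [lra|]. intros z Hz Hd.
  split; [exact Hz|]. apply sq_of_dist in Hd. rewrite sq7_expl in Hd.
  destruct (Gamma_expl y Hy) as (Y0&Y1&Y2&Y3&Y4&Y5&Y6&Ys&Yp).
  destruct (simplex_expl z Hz) as (Z0&Z1&Z2&Z3&Z4&Z5&Z6&Zs).
  assert (Hsq : forall a b, 0 <= b -> a = 0 -> (a - b)^2 < (eta/5)^2 -> b < eta/5).
  { intros a b Hb Ha H. subst a. destruct (Rlt_or_le b (eta/5)); auto. nra. }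
  pose proof (pow2_ge_0 (y 0%nat - z 0%nat)). pose proof (pow2_ge_0 (y 1%nat - z 1%nat)).
  pose proof (pow2_ge_0 (y 2%nat - z 2%nat)). pose proof (pow2_ge_0 (y 3%nat - z 3%nat)).
  pose proof (pow2_ge_0 (y 4%nat - z 4%nat)). pose proof (pow2_ge_0 (y 5%nat - z 5%nat)).
  pose proof (pow2_ge_0 (y 6%nat - z 6%nat)).
  assert (B0 : z 0%nat < eta/5) by (apply (Hsq (y 0%nat)); auto; lra).
  assert (B1 : z 1%nat < eta/5) by (apply (Hsq (y 1%nat)); auto; lra).
  assert (B2 : z 2%nat < eta/5) by (apply (Hsq (y 2%nat)); auto; lra).
  assert (B3 : z 3%nat < eta/5) by (apply (Hsq (y 3%nat)); auto; lra).
  assert (Bp : z 4%nat * z 5%nat * z 6%nat < eta/5).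
  { destruct Yp as [Yp|[Yp|Yp]].
    - assert (z 4%nat < eta/5) by (apply (Hsq (y 4%nat)); auto; lra).
      assert (z 5%nat * z 6%nat <= 1) by nra. nra.
    - assert (z 5%nat < eta/5) by (apply (Hsq (y 5%nat)); auto; lra).
      assert (z 4%nat * z 6%nat <= 1) by nra. nra.
    - assert (z 6%nat < eta/5) by (apply (Hsq (y 6%nat)); auto; lra).
      assert (z 4%nat * z 5%nat <= 1) by nra. nra. }
  unfold Lf. lra.
Qed.

Lemma core_prox (a b c d p q r eta : R) : 0 <= a -> 0 <= b -> 0 <= c -> 0 <= d -> 0 <= p -> 0 <= q -> 0 <= r ->
  a+b+c+d+p+q+r = 1 -> a+b+c+d+p*q*r <= eta -> eta <= 1/10000 -> r <= p -> r <= q ->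
  a^2+b^2+c^2+d^2 + 2*((a+b+c+d+r)/2)^2 + r^2 <= 9*eta.
Proof.
  intros Ha Hb Hc Hd Hp Hq Hr Hs HL He Hrp Hrq.
  set (m := a+b+c+d).
  assert (H0 : 0 <= p*q*r) by (apply Rmult_le_pos; [apply Rmult_le_pos|]; lra).
  assert (Hm : 0 <= m <= eta) by (unfold m; lra).
  assert (Hsq : a^2+b^2+c^2+d^2 <= m^2).
  { unfold m. assert (0 <= a*b) by nra. assert (0 <= a*c) by nra. assert (0 <= a*d) by nra.
    assert (0 <= b*c) by nra. assert (0 <= b*d) by nra. assert (0 <= c*d) by nra. nra. }
  assert (H2 : 2*((m+r)/2)^2 <= m^2 + r^2) by (pose proof (pow2_ge_0 (m-r)); nra).
  assert (Hm2 : m^2 <= eta/10000) by nra.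
  assert (Hr3 : r <= 1/3) by lra.
  assert (Hpq : p + q >= 66/100) by (unfold m in Hm; lra).
  assert (Hr2 : r^2*(p+q) <= 2*(p*q*r)).
  { assert (r*r*p <= q*r*p) by (apply Rmult_le_compat_r; [lra|]; apply Rmult_le_compat_r; lra).
    assert (r*r*q <= p*r*q) by (apply Rmult_le_compat_r; [lra|]; apply Rmult_le_compat_r; lra).
    nra. }
  assert (Hr2' : r^2 * (66/100) <= r^2 * (p+q)) by (apply Rmult_le_compat_l; [apply pow2_ge_0|lra]).
  assert (p*q*r <= eta) by (unfold m in Hm; lra).
  fold m. lra.
Qed.

Definition proj6 (z : nat -> R) : nat -> R := fun i =>
  match i with
  | 4%nat => z 4%nat + (z 0%nat + z 1%nat + z 2%nat + z 3%nat + z 6%nat)/2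
  | 5%nat => z 5%nat + (z 0%nat + z 1%nat + z 2%nat + z 3%nat + z 6%nat)/2
  | _ => 0 end.
Definition proj4 (z : nat -> R) : nat -> R := fun i =>
  match i with
  | 5%nat => z 5%nat + (z 0%nat + z 1%nat + z 2%nat + z 3%nat + z 4%nat)/2
  | 6%nat => z 6%nat + (z 0%nat + z 1%nat + z 2%nat + z 3%nat + z 4%nat)/2
  | _ => 0 end.
Definition proj5 (z : nat -> R) : nat -> R := fun i =>
  match i with
  | 4%nat => z 4%nat + (z 0%nat + z 1%nat + z 2%nat + z 3%nat + z 5%nat)/2
  | 6%nat => z 6%nat + (z 0%nat + z 1%nat + z 2%nat + z 3%nat + z 5%nat)/2
  | _ => 0 end.

Lemma nonneg_cases (y : nat -> R) : 0 <= y 4%nat -> 0 <= y 5%nat -> 0 <= y 6%nat ->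
  (forall i, (i <> 4 /\ i <> 5 /\ i <> 6)%nat -> y i = 0) -> forall i, (i < 7)%nat -> 0 <= y i.
Proof. intros H4 H5 H6 H i Hi.
  destruct (Nat.eq_dec i 4) as [->|]; auto. destruct (Nat.eq_dec i 5) as [->|]; auto.
  destruct (Nat.eq_dec i 6) as [->|]; auto. rewrite H; auto. lra. Qed.

Lemma prox z eta : simplex7 z -> Lf z <= eta -> eta <= 1/10000 ->
  exists y, Gamma567 y /\ sq7 z y <= 9*eta.
Proof.
  intros Hz HL He. destruct (simplex_expl z Hz) as (Z0&Z1&Z2&Z3&Z4&Z5&Z6&Zs). unfold Lf in HL.
  destruct (Rle_or_lt (z 6%nat) (z 4%nat)) as [A|A];
  destruct (Rle_or_lt (z 6%nat) (z 5%nat)) as [B|B];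
  destruct (Rle_or_lt (z 4%nat) (z 5%nat)) as [C|C].
  all: first
   [ assert (Hmin : z 6%nat <= z 4%nat /\ z 6%nat <= z 5%nat) by lra;
     exists (proj6 z); split;
     [ split; [split; [apply nonneg_cases; simpl; try lra;
               intros i (?&?&?); destruct i as [|[|[|[|[|[|[|]]]]]]]; simpl; try lia; reflexivity
             | simpl; lra]
       | simpl; split; [lra | ring]]
     | rewrite sq7_expl; simpl;
       pose proof (core_prox (z 0%nat) (z 1%nat) (z 2%nat) (z 3%nat) (z 4%nat) (z 5%nat) (z 6%nat) eta
          Z0 Z1 Z2 Z3 Z4 Z5 Z6 Zs HL He (proj1 Hmin) (proj2 Hmin)) as K;
       match type of K with ?A <= _ => match goal with |- ?B <= _ => replace B with A by field end end; exact K ]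
   | assert (Hmin : z 4%nat <= z 5%nat /\ z 4%nat <= z 6%nat) by lra;
     exists (proj4 z); split;
     [ split; [split; [apply nonneg_cases; simpl; try lra;
               intros i (?&?&?); destruct i as [|[|[|[|[|[|[|]]]]]]]; simpl; try lia; reflexivity
             | simpl; lra]
       | simpl; split; [lra | ring]]
     | rewrite sq7_expl; simpl;
       assert (HL' : z 0%nat + z 1%nat + z 2%nat + z 3%nat + z 5%nat * z 6%nat * z 4%nat <= eta) by
         (replace (z 5%nat * z 6%nat * z 4%nat) with (z 4%nat * z 5%nat * z 6%nat) by ring; exact HL);
       pose proof (core_prox (z 0%nat) (z 1%nat) (z 2%nat) (z 3%nat) (z 5%nat) (z 6%nat) (z 4%nat) eta
          Z0 Z1 Z2 Z3 Z5 Z6 Z4 ltac:(lra) HL' He (proj1 Hmin) (proj2 Hmin)) as K;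
       match type of K with ?A <= _ => match goal with |- ?B <= _ => replace B with A by field end end; exact K ]
   | assert (Hmin : z 5%nat <= z 4%nat /\ z 5%nat <= z 6%nat) by lra;
     exists (proj5 z); split;
     [ split; [split; [apply nonneg_cases; simpl; try lra;
               intros i (?&?&?); destruct i as [|[|[|[|[|[|[|]]]]]]]; simpl; try lia; reflexivity
             | simpl; lra]
       | simpl; split; [lra | ring]]
     | rewrite sq7_expl; simpl;
       assert (HL' : z 0%nat + z 1%nat + z 2%nat + z 3%nat + z 4%nat * z 6%nat * z 5%nat <= eta) by
         (replace (z 4%nat * z 6%nat * z 5%nat) with (z 4%nat * z 5%nat * z 6%nat) by ring; exact HL);
       pose proof (core_prox (z 0%nat) (z 1%nat) (z 2%nat) (z 3%nat) (z 4%nat) (z 6%nat) (z 5%nat) eta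
          Z0 Z1 Z2 Z3 Z4 Z6 Z5 ltac:(lra) HL' He (proj1 Hmin) (proj2 Hmin)) as K;
       match type of K with ?A <= _ => match goal with |- ?B <= _ => replace B with A by field end end; exact K ] ].
Qed.

Lemma edge_leb (e : R -> nat -> R) (V : (nat -> R) -> Prop) : nbhd_in_S7 Gamma567 V ->
  (forall s, 0 <= s <= 1 -> Gamma567 (e s)) -> (forall s t, sq7 (e s) (e t) = 2*(s-t)^2) ->
  exists rho, 0 < rho /\ forall s, 0 <= s <= 1 -> forall z, simplex7 z -> sq7 (e s) z < rho^2 -> V z.
Proof.
  intros HV HG He.
  assert (Hr : forall s, {r : R | 0 < r /\ (0 <= s <= 1 -> forall z, simplex7 z -> sq7 (e s) z < r^2 -> V z)}).
  { intros s. apply constructive_indefinite_description.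
    destruct (classic (0 <= s <= 1)) as [Hs|Hs].
    - destruct (HV (e s) (HG s Hs)) as [r [Hr0 Hr1]]. exists r. split; auto.
      intros _ z Hz Hd. apply Hr1; auto. apply dist_of_sq; auto.
    - exists 1. split; [lra|]. tauto. }
  set (delta := fun s => mkposreal (proj1_sig (Hr s) / 4) ltac:(destruct (proj2_sig (Hr s)); lra)).
  destruct (compactness_value_1d 0 1 delta) as [d Hd].
  exists d. split; [apply cond_pos|]. intros s Hs z Hz Hsz.
  apply NNPP. intros HVz. apply (Hd s Hs). intros [t [Ht [Hst Hdt]]].
  apply HVz. destruct (proj2_sig (Hr t)) as [Hr0 Hr1]. apply (Hr1 Ht z Hz).
  simpl in Hst, Hdt. set (rt := proj1_sig (Hr t)) in *.
  pose proof (sq7_tri (e t) (e s) z) as T. rewrite He in T.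
  apply Rabs_def2 in Hst. pose proof (cond_pos d).
  assert (A1 : s - t < rt/4) by exact (proj1 Hst).
  assert (A2 : -(rt/4) < s - t) by exact (proj2 Hst).
  assert (A3 : d <= rt/4) by exact Hdt. clear Hst Hdt.
  assert ((t - s)^2 < (rt/4)^2) by nra.
  assert (d^2 <= (rt/4)^2) by nra.
  nra.
Qed.

Definition e1 (s : R) : nat -> R := fun i => match i with 4%nat => s | 5%nat => 1 - s | _ => 0 end.
Definition e2 (s : R) : nat -> R := fun i => match i with 5%nat => s | 6%nat => 1 - s | _ => 0 end.
Definition e3 (s : R) : nat -> R := fun i => match i with 6%nat => s | 4%nat => 1 - s | _ => 0 end.

Ltac gamma_edge := split; [split; [apply nonneg_cases; simpl; try lra;
               intros i (?&?&?); destruct i as [|[|[|[|[|[|[|]]]]]]]; simpl; try lia; reflexivity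
             | simpl; lra] | simpl; split; [lra | ring]].

Lemma leb (V : (nat -> R) -> Prop) : nbhd_in_S7 Gamma567 V ->
  exists rho, 0 < rho /\ forall y, Gamma567 y -> forall z, simplex7 z -> sq7 y z < rho^2 -> V z.
Proof.
  intros HV.
  destruct (edge_leb e1 V HV) as [r1 [Hr1 H1]].
  { intros s Hs. unfold e1. gamma_edge. }
  { intros s t. rewrite sq7_expl. simpl. ring. }
  destruct (edge_leb e2 V HV) as [r2 [Hr2 H2]].
  { intros s Hs. unfold e2. gamma_edge. }
  { intros s t. rewrite sq7_expl. simpl. ring. }
  destruct (edge_leb e3 V HV) as [r3 [Hr3 H3]].
  { intros s Hs. unfold e3. gamma_edge. }
  { intros s t. rewrite sq7_expl. simpl. ring. }
  exists (Rmin r1 (Rmin r2 r3)). split.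
  { apply Rmin_pos; auto. apply Rmin_pos; auto. }
  intros y Hy z Hz Hyz.
  assert (Hm1 : Rmin r1 (Rmin r2 r3) <= r1) by apply Rmin_l.
  assert (Hm2 : Rmin r1 (Rmin r2 r3) <= r2) by (eapply Rle_trans; [apply Rmin_r|apply Rmin_l]).
  assert (Hm3 : Rmin r1 (Rmin r2 r3) <= r3) by (eapply Rle_trans; [apply Rmin_r|apply Rmin_r]).
  assert (0 < Rmin r1 (Rmin r2 r3)) by (apply Rmin_pos; auto; apply Rmin_pos; auto).
  destruct (Gamma_expl y Hy) as (Y0&Y1&Y2&Y3&Y4&Y5&Y6&Ys&Yp).
  destruct Yp as [Yp|[Yp|Yp]].
  - apply (H2 (y 5%nat)); auto. lra.
    assert (E : sq7 (e2 (y 5%nat)) z = sq7 y z).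
    { rewrite !sq7_expl. simpl. rewrite Y0, Y1, Y2, Y3, Yp. replace (1 - y 5%nat) with (y 6%nat) by lra. ring. }
    rewrite E. eapply Rlt_le_trans; [exact Hyz|]. apply pow_incr. lra.
  - apply (H3 (y 6%nat)); auto. lra.
    assert (E : sq7 (e3 (y 6%nat)) z = sq7 y z).
    { rewrite !sq7_expl. simpl. rewrite Y0, Y1, Y2, Y3, Yp. replace (1 - y 6%nat) with (y 4%nat) by lra. ring. }
    rewrite E. eapply Rlt_le_trans; [exact Hyz|]. apply pow_incr. lra.
  - apply (H1 (y 4%nat)); auto. lra.
    assert (E : sq7 (e1 (y 4%nat)) z = sq7 y z).
    { rewrite !sq7_expl. simpl. rewrite Y0, Y1, Y2, Y3, Yp. replace (1 - y 4%nat) with (y 5%nat) by lra. ring. }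
    rewrite E. eapply Rlt_le_trans; [exact Hyz|]. apply pow_incr. lra.
Qed.

Lemma isd_mult (f g : R -> R) t df dg : is_derive f t df -> is_derive g t dg ->
  is_derive (fun s => f s * g s) t (df * g t + f t * dg).
Proof. intros Hf Hg. exact (is_derive_mult f g t df dg Hf Hg Rmult_comm). Qed.

Lemma isd_plus (f g : R -> R) t df dg : is_derive f t df -> is_derive g t dg ->
  is_derive (fun s => f s + g s) t (df + dg).
Proof. intros Hf Hg. exact (is_derive_plus f g t df dg Hf Hg). Qed.

Lemma isd_sum (f : R -> nat -> R) (df : nat -> R) t n :
  (forall i, (i <= n)%nat -> is_derive (fun s => f s i) t (df i)) ->
  is_derive (fun s => sum_f_R0 (f s) n) t (sum_f_R0 df n).
Proof. induction n as [|n IH]; intros H; simpl.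
  - apply H; lia.
  - apply isd_plus. apply IH; intros; apply H; lia. apply H; lia. Qed.

Lemma isd_expk (k t : R) : is_derive (fun s => exp (k * s)) t (k * exp (k * t)).
Proof. auto_derive. auto. ring. Qed.

Lemma fl_sum {T} (F : (T->Prop)->Prop) {FF : Filter F} (f : T -> nat -> R) (l : nat -> R) n :
  (forall i, (i <= n)%nat -> filterlim (fun s => f s i) F (locally (l i))) ->
  filterlim (fun s => sum_f_R0 (f s) n) F (locally (sum_f_R0 l n)).
Proof. induction n as [|n IH]; intros H; simpl.
  - apply H; lia.
  - apply (fl_plus F (fun s => sum_f_R0 (f s) n) (fun s => f s (S n))); [apply IH; intros; apply H; lia | apply H; lia]. Qed.

Lemma fl_Lf {T} (F : (T->Prop)->Prop) {FF : Filter F} (y : T -> nat -> R) (l : nat -> R) :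
  (forall i, (i < 7)%nat -> filterlim (fun s => y s i) F (locally (l i))) ->
  filterlim (fun s => Lf (y s)) F (locally (Lf l)).
Proof. intros H. unfold Lf.
  repeat first [exact FF | apply fl_plus | apply fl_mult | (apply H; lia)]. Qed.

Lemma fin_conj {T} (F : (T->Prop)->Prop) {FF : Filter F} (Q : nat -> T -> Prop) n :
  (forall i, (i < n)%nat -> F (Q i)) -> F (fun s => forall i, (i < n)%nat -> Q i s).
Proof. induction n as [|n IH]; intros H.
  - apply filter_forall. intros s i Hi; lia.
  - apply (filter_imp (fun s => (forall i, (i < n)%nat -> Q i s) /\ Q n s)).
    + intros s [H1 H2] i Hi. destruct (Nat.eq_dec i n) as [->|]; auto. apply H1; lia.
    + apply filter_and. apply IH; intros; apply H; lia. apply H; lia. Qed.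

Lemma mono (v dv : R -> R) a b l : a < b ->
  (forall s, a < s < b -> is_derive v s (dv s)) -> (forall s, a < s < b -> dv s <= 0) ->
  filterlim v (at_right a) (locally l) -> forall s, a < s < b -> v s <= l.
Proof.
  intros Hab Hd Hneg Hl s Hs. apply Rnot_lt_le. intros Hlt.
  assert (Hev : at_right a (fun a' => (a < a' < a + (s - a)) /\ ball l (mkposreal (v s - l) ltac:(lra)) (v a'))).
  { apply filter_and. apply at_right_lt. lra. apply filterlim_locally with (eps := mkposreal (v s - l) ltac:(lra)) in Hl. exact Hl. }
  destruct (filter_ex _ Hev) as [a' [Ha' Hb']]. apply ball_R2 in Hb'. cbn [pos] in Hb'.
  destruct (MVT_gen v a' s dv) as [c [Hc Heq]].
  - intros y Hy. rewrite Rmin_left in Hy by lra. rewrite Rmax_right in Hy by lra. apply Hd; lra.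
  - intros y Hy. rewrite Rmin_left in Hy by lra. rewrite Rmax_right in Hy by lra.
    apply continuity_pt_filterlim. apply (deriv_cont v y (dv y)). apply Hd; lra.
  - rewrite Rmin_left in Hc by lra. rewrite Rmax_right in Hc by lra.
    assert (dv c <= 0) by (apply Hneg; lra).
    assert (dv c * (s - a') <= 0) by nra.
    lra.
Qed.

Lemma gronwall (u du : R -> R) T d K : 0 < d ->
  (forall s, T < s < T + d -> is_derive u s (du s)) ->
  (forall s, T < s < T + d -> du s <= K * u s) ->
  (forall s, T < s < T + d -> 0 <= u s) ->
  filterlim u (at_right T) (locally 0) -> forall s, T < s < T + d -> u s = 0.
Proof.
  intros Hd Hder Hle Hpos Hlim s Hs.
  set (v := fun s => u s * exp (-K * s)).
  assert (Hv : forall s, T < s < T + d -> v s <= 0 * exp (-K * T)).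
  { apply (mono v (fun s => du s * exp (-K*s) + u s * (-K * exp (-K * s))) T (T+d)); [lra| | |].
    - intros y Hy. apply (isd_mult u (fun s => exp (-K*s)) y). apply Hder; auto. apply isd_expk.
    - intros y Hy. pose proof (Hle y Hy). pose proof (exp_pos (-K*y)).
      replace (du y * exp (- K * y) + u y * (- K * exp (- K * y))) with ((du y - K * u y) * exp (-K*y)) by ring.
      nra.
    - apply (fl_mult (at_right T) u (fun s => exp (-K*s))); auto.
      apply loc_right. apply (deriv_cont _ _ _ (isd_expk (-K) T)). }
  pose proof (Hv s Hs). pose proof (Hpos s Hs). pose proof (exp_pos (-K*s)). unfold v in *.
  rewrite Rmult_0_l in H. nra.
Qed.

Lemma cont_ind (P : R -> Prop) :
  (forall T, 0 <= T -> (forall s, 0 <= s < T -> P s) -> exists d, 0 < d /\ forall s, T <= s < T + d -> P s) ->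
  forall t, 0 <= t -> P t.
Proof.
  intros Hext t0 Ht0. apply NNPP. intros Hn.
  set (E := fun T => 0 <= T /\ forall s, 0 <= s < T -> P s).
  assert (HB : bound E).
  { exists t0. intros T [HT HP]. apply Rnot_lt_le. intros Hlt. apply Hn, HP. lra. }
  assert (HE : exists x, E x). { exists 0. split; [lra|]. intros; lra. }
  destruct (completeness E HB HE) as [m [Hub Hlub]].
  assert (Hm0 : 0 <= m) by (apply Hub; split; [lra|intros; lra]).
  assert (Hbelow : forall s, 0 <= s < m -> P s).
  { intros s Hs. apply NNPP. intros HPs.
    assert (is_upper_bound E s).
    { intros T [HT HP]. apply Rnot_lt_le. intros Hlt. apply HPs, HP. lra. }
    pose proof (Hlub s H). lra. }
  destruct (Hext m Hm0 Hbelow) as [d [Hd Hd']].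
  assert (E (m + d)).
  { split; [lra|]. intros s Hs. destruct (Rlt_or_le s m). apply Hbelow; lra. apply Hd'; lra. }
  pose proof (Hub _ H). lra.
Qed.

Lemma Umat_bound eps i j : 0 < eps < 1 -> Rabs (Umat eps i j) <= 10.
Proof. intros He.
  destruct i as [|[|[|[|[|[|[|i]]]]]]]; destruct j as [|[|[|[|[|[|[|j]]]]]]];
  simpl; unfold Rabs; destruct Rcase_abs; lra. Qed.

Lemma Ux_bound eps y i : 0 < eps < 1 -> (forall j, (j < 7)%nat -> Rabs (y j) <= 2) -> Rabs (Ux eps y i) <= 140.
Proof. intros He Hy. unfold Ux. eapply Rle_trans. apply sum_f_R0_triangle.
  eapply Rle_trans. apply (sum_Rle _ (fun _ => 20)).
  - intros n Hn. rewrite Rabs_mult. pose proof (Umat_bound eps i n He). pose proof (Hy n ltac:(lia)).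
    pose proof (Rabs_pos (Umat eps i n)). pose proof (Rabs_pos (y n)).
    replace 20 with (10 * 2) by ring. apply Rmult_le_compat; auto.
  - rewrite sum_cte. simpl. lra. Qed.

Lemma avg_bound eps y : 0 < eps < 1 -> (forall j, (j < 7)%nat -> Rabs (y j) <= 2) -> Rabs (avg_payoff eps y) <= 1960.
Proof. intros He Hy. unfold avg_payoff. eapply Rle_trans. apply sum_f_R0_triangle.
  eapply Rle_trans. apply (sum_Rle _ (fun _ => 280)).
  - intros n Hn. rewrite Rabs_mult. pose proof (Ux_bound eps y n He Hy). pose proof (Hy n ltac:(lia)).
    pose proof (Rabs_pos (Ux eps y n)). pose proof (Rabs_pos (y n)).
    replace 280 with (2 * 140) by ring. apply Rmult_le_compat; auto.
  - rewrite sum_cte. simpl. lra. Qed.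

Lemma rep_sum eps y n : sum_f_R0 (fun i => replicator eps y i) n =
  sum_f_R0 (fun i => y i * Ux eps y i) n - avg_payoff eps y * sum_f_R0 y n.
Proof. unfold replicator. induction n as [|n IH]; simpl. ring. rewrite IH. ring. Qed.

Lemma exp_ge1 t : 0 <= t -> 1 <= exp t.
Proof. intros Ht. destruct (Req_dec t 0) as [->|H]. rewrite exp_0; lra.
  pose proof (exp_ineq1 t H). lra. Qed.

Lemma isd_Lf (y : R -> nat -> R) (dy : nat -> R) t :
  (forall i, (i < 7)%nat -> is_derive (fun s => y s i) t (dy i)) ->
  is_derive (fun s => Lf (y s)) t
    (dy 0%nat + dy 1%nat + dy 2%nat + dy 3%nat +
     ((dy 4%nat * y t 5%nat + y t 4%nat * dy 5%nat) * y t 6%nat + y t 4%nat * y t 5%nat * dy 6%nat)).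
Proof. intros H. unfold Lf.
  apply (isd_plus (fun s => y s 0%nat + y s 1%nat + y s 2%nat + y s 3%nat) (fun s => y s 4%nat * y s 5%nat * y s 6%nat)).
  - apply (isd_plus (fun s => y s 0%nat + y s 1%nat + y s 2%nat) (fun s => y s 3%nat)); [|apply H; lia].
    apply (isd_plus (fun s => y s 0%nat + y s 1%nat) (fun s => y s 2%nat)); [|apply H; lia].
    apply (isd_plus (fun s => y s 0%nat) (fun s => y s 1%nat)); apply H; lia.
  - apply (isd_mult (fun s => y s 4%nat * y s 5%nat) (fun s => y s 6%nat)); [|apply H; lia].
    apply (isd_mult (fun s => y s 4%nat) (fun s => y s 5%nat)); apply H; lia.
Qed.

Lemma isd_const (a t : R) : is_derive (fun _ => a) t 0.
Proof. exact (is_derive_const a t). Qed.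

Lemma fl_id_at_right T : filterlim (fun s : R => s) (at_right T) (locally T).
Proof. apply loc_right. apply filterlim_id. Qed.

Lemma dyn eps x : 0 < eps <= 1/200 -> replicator_solution eps x -> simplex7 (x 0) -> Lf (x 0) < 1/10000 ->
  forall t, 0 <= t -> simplex7 (x t) /\ Lf (x t) * exp (1/50 * t) <= Lf (x 0).
Proof.
  intros He [Hder Hr0] Hx0 HL0.
  set (L0 := Lf (x 0)).
  assert (He1 : 0 < eps < 1) by lra.
  assert (Hcont : forall T, 0 < T -> forall i, (i<7)%nat -> filterlim (fun s => x s i) (locally T) (locally (x T i))).
  { intros T HT i Hi. apply (deriv_cont _ _ _ (Hder T HT i Hi)). }
  assert (Hrc : forall T, 0 <= T -> forall i, (i<7)%nat -> filterlim (fun s => x s i) (at_right T) (locally (x T i))).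
  { intros T HT i Hi. destruct (Req_dec T 0) as [->|HT0]. apply Hr0; auto. apply loc_right, Hcont; auto; lra. }
  assert (Hexpc : forall T, filterlim (fun s => exp (1/50 * s)) (locally T) (locally (exp (1/50 * T)))).
  { intros T. apply (deriv_cont _ _ _ (isd_expk (1/50) T)). }
  apply (cont_ind (fun t => simplex7 (x t) /\ Lf (x t) * exp (1/50 * t) <= L0)).
  intros T HT IH.
  assert (PT : simplex7 (x T) /\ Lf (x T) * exp (1/50 * T) <= L0).
  { destruct (Req_dec T 0) as [->|HT0].
    - split; auto. rewrite Rmult_0_r, exp_0, Rmult_1_r. unfold L0; lra.
    - assert (HT' : 0 < T) by lra. split; [split|].
      + intros i Hi. assert (-(x T i) <= 0); [|lra].
        apply (closed_left (fun s => - x s i) T); auto.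
        apply (fl_opp (locally T) (fun s => x s i)). apply Hcont; auto.
        intros s Hs. destruct (IH s Hs) as [[Hn _] _]. pose proof (Hn i Hi). lra.
      + assert (Hc : filterlim (fun s => sum_f_R0 (x s) 6 + -1) (locally T) (locally (sum_f_R0 (x T) 6 + -1))).
        { apply (fl_plus (locally T) (fun s => sum_f_R0 (x s) 6) (fun _ => -1)).
          apply (fl_sum (locally T) x (x T)). intros; apply Hcont; auto; lia. apply filterlim_const. }
        assert (Hc' : filterlim (fun s => - (sum_f_R0 (x s) 6 + -1)) (locally T) (locally (- (sum_f_R0 (x T) 6 + -1)))).
        { apply (fl_opp (locally T) (fun s => sum_f_R0 (x s) 6 + -1)). exact Hc. }
        assert (sum_f_R0 (x T) 6 + -1 <= 0).
        { apply (closed_left _ T _ HT' Hc). intros s Hs. destruct (IH s Hs) as [[_ Hsum] _]. lra. }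
        assert (- (sum_f_R0 (x T) 6 + -1) <= 0).
        { apply (closed_left _ T _ HT' Hc'). intros s Hs. destruct (IH s Hs) as [[_ Hsum] _]. lra. }
        lra.
      + assert (Hc : filterlim (fun s => Lf (x s) * exp (1/50 * s) + - L0) (locally T) (locally (Lf (x T) * exp (1/50 * T) + - L0))).
        { apply (fl_plus (locally T) (fun s => Lf (x s) * exp (1/50 * s)) (fun _ => - L0)); [|apply filterlim_const].
          apply (fl_mult (locally T) (fun s => Lf (x s)) (fun s => exp (1/50 * s))); [|apply Hexpc].
          apply (fl_Lf (locally T) x (x T)). intros; apply Hcont; auto. }
        assert (Lf (x T) * exp (1/50 * T) + - L0 <= 0); [|lra].
        apply (closed_left _ T _ HT' Hc). intros s Hs. destruct (IH s Hs) as [_ HL]. lra. }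
  destruct PT as [[HnT HsT] HPhiT].
  assert (HxT : forall i, (i < 7)%nat -> 0 <= x T i <= 1).
  { intros i Hi. split. apply HnT; auto. destruct (simplex_expl _ (conj HnT HsT)) as (A0&A1&A2&A3&A4&A5&A6&As).
    destruct i as [|[|[|[|[|[|[|i]]]]]]]; try lia; lra. }
  assert (HLfT0 : 0 <= Lf (x T)).
  { unfold Lf. pose proof (HxT 0%nat ltac:(lia)). pose proof (HxT 1%nat ltac:(lia)).
    pose proof (HxT 2%nat ltac:(lia)). pose proof (HxT 3%nat ltac:(lia)).
    assert (0 <= x T 4%nat * x T 5%nat * x T 6%nat).
    { pose proof (HxT 4%nat ltac:(lia)). pose proof (HxT 5%nat ltac:(lia)). pose proof (HxT 6%nat ltac:(lia)).
      apply Rmult_le_pos; [apply Rmult_le_pos|]; lra. }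
    lra. }
  assert (HLT : Lf (x T) <= L0).
  { pose proof (exp_ge1 (1/50 * T) ltac:(lra)). nra. }
  assert (Ev1 : at_right T (fun s => forall i, (i < 7)%nat -> x T i - 1 < x s i < x T i + 1)).
  { apply (fin_conj (at_right T) (fun i s => x T i - 1 < x s i < x T i + 1)).
    intros i Hi. pose proof (Hrc T HT i Hi) as Hl.
    apply filterlim_locally with (eps := mkposreal 1 Rlt_0_1) in Hl.
    eapply filter_imp; [|exact Hl]. intros s Hs. apply ball_R2 in Hs. exact Hs. }
  assert (Ev2 : at_right T (fun s => forall i, (i < 7)%nat -> 0 < x T i -> 0 < x s i)).
  { apply (fin_conj (at_right T) (fun i s => 0 < x T i -> 0 < x s i)).
    intros i Hi. destruct (Rlt_or_le 0 (x T i)) as [Hp|Hp].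
    - pose proof (Hrc T HT i Hi) as Hl.
      apply filterlim_locally with (eps := mkposreal (x T i) Hp) in Hl.
      eapply filter_imp; [|exact Hl]. intros s Hs _. apply ball_R2 in Hs. cbn [pos] in Hs. lra.
    - apply filter_forall. intros s Hs. lra. }
  assert (Ev3 : at_right T (fun s => Lf (x s) < 1/10000)).
  { assert (Hl : filterlim (fun s => Lf (x s)) (at_right T) (locally (Lf (x T)))).
    { apply (fl_Lf (at_right T) x (x T)). intros; apply Hrc; auto. }
    assert (Hp : 0 < 1/10000 - Lf (x T)) by (unfold L0 in *; lra).
    apply filterlim_locally with (eps := mkposreal _ Hp) in Hl.
    eapply filter_imp; [|exact Hl]. intros s Hs. apply ball_R2 in Hs. cbn [pos] in Hs. lra. }
  destruct (at_right_ex T _ (filter_and _ _ Ev1 (filter_and _ _ Ev2 Ev3))) as [d [Hd Hev]].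
  assert (Hspos : forall s, T < s < T + d -> 0 < s) by (intros; lra).
  assert (Hbnd : forall s, T < s < T + d -> forall j, (j < 7)%nat -> Rabs (x s j) <= 2).
  { intros s Hs j Hj. destruct (Hev s Hs) as [E1 _]. pose proof (E1 j Hj). pose proof (HxT j Hj).
    unfold Rabs; destruct Rcase_abs; lra. }
  assert (HUb : forall s, T < s < T + d -> forall i, Rabs (Ux eps (x s) i) <= 140).
  { intros s Hs i. apply Ux_bound; auto. }
  assert (Havb : forall s, T < s < T + d -> Rabs (avg_payoff eps (x s)) <= 1960).
  { intros s Hs. apply avg_bound; auto. }
  assert (Hsum : forall s, T < s < T + d -> sum_f_R0 (x s) 6 = 1).
  { set (S := fun s => sum_f_R0 (x s) 6).
    set (dS := fun s => sum_f_R0 (fun i => replicator eps (x s) i) 6).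
    assert (HdS : forall s, 0 < s -> is_derive S s (dS s)).
    { intros s Hs. apply (isd_sum x (fun i => replicator eps (x s) i) s 6). intros i Hi. apply Hder; auto; lia. }
    assert (HdSe : forall s, dS s = - avg_payoff eps (x s) * (S s + -1)).
    { intros s. unfold dS. rewrite rep_sum. unfold S. fold (avg_payoff eps (x s)). ring. }
    set (u := fun s => (S s + -1) * (S s + -1)).
    assert (Hu0 : forall s, T < s < T + d -> u s = 0).
    { apply (gronwall u (fun s => (dS s + 0) * (S s + -1) + (S s + -1) * (dS s + 0)) T d 3920); auto.
      - intros s Hs. apply (isd_mult (fun s => S s + -1) (fun s => S s + -1));
        apply (isd_plus S (fun _ => -1)); [apply HdS; auto| apply isd_const|apply HdS; auto|apply isd_const].
      - intros s Hs. rewrite HdSe. unfold u. pose proof (Havb s Hs) as Ha.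
        set (w := S s + -1). set (a := avg_payoff eps (x s)) in *.
        assert (-1960 <= a) by (unfold Rabs in Ha; destruct Rcase_abs; lra).
        assert (0 <= (a + 1960) * (w * w)) by (apply Rmult_le_pos; [lra|apply Rle_0_sqr]). nra.
      - intros s Hs. apply Rle_0_sqr.
      - replace 0 with ((S T + -1) * (S T + -1)) by (unfold S; rewrite HsT; ring).
        apply (fl_mult (at_right T) (fun s => S s + -1) (fun s => S s + -1));
        apply (fl_plus (at_right T) S (fun _ => -1)); try apply filterlim_const;
        apply (fl_sum (at_right T) x (x T)); intros; apply Hrc; auto; lia. }
    intros s Hs. pose proof (Hu0 s Hs). unfold u in H. apply Rmult_integral in H. fold (S s). lra. }
  assert (Hnn : forall s, T < s < T + d -> forall i, (i < 7)%nat -> 0 <= x s i).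
  { intros s Hs i Hi. destruct (Rlt_or_le 0 (x T i)) as [Hp|Hp].
    - destruct (Hev s Hs) as [_ [E2 _]]. pose proof (E2 i Hi Hp). lra.
    - assert (HT0 : x T i = 0) by (pose proof (HxT i Hi); lra).
      set (u := fun s => x s i * x s i).
      assert (Hu0 : forall s, T < s < T + d -> u s = 0).
      { apply (gronwall u (fun s => replicator eps (x s) i * x s i + x s i * replicator eps (x s) i) T d 4200); auto.
        - intros y Hy. apply (isd_mult (fun s => x s i) (fun s => x s i)); apply Hder; auto.
        - intros y Hy. unfold u, replicator. pose proof (HUb y Hy i) as H1. pose proof (Havb y Hy) as H2.
          set (g := Ux eps (x y) i - avg_payoff eps (x y)).
          assert (g <= 2100) by (unfold g; unfold Rabs in H1, H2; destruct Rcase_abs; destruct Rcase_abs; lra).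
          assert (0 <= (2100 - g) * (x y i * x y i)) by (apply Rmult_le_pos; [lra|apply Rle_0_sqr]).
          nra.
        - intros y Hy. apply Rle_0_sqr.
        - replace 0 with (x T i * x T i) by (rewrite HT0; ring).
          apply (fl_mult (at_right T) (fun s => x s i) (fun s => x s i)); apply Hrc; auto. }
      pose proof (Hu0 s Hs). unfold u in H. apply Rmult_integral in H. lra. }
  assert (HPhi : forall s, T < s < T + d -> Lf (x s) * exp (1/50 * s) <= Lf (x T) * exp (1/50 * T)).
  { set (dr := fun s i => replicator eps (x s) i).
    apply (mono (fun s => Lf (x s) * exp (1/50 * s))
       (fun s => (dr s 0%nat + dr s 1%nat + dr s 2%nat + dr s 3%nat +
          ((dr s 4%nat * x s 5%nat + x s 4%nat * dr s 5%nat) * x s 6%nat + x s 4%nat * x s 5%nat * dr s 6%nat))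
          * exp (1/50 * s) + Lf (x s) * (1/50 * exp (1/50 * s))) T (T + d)); [lra | | |].
    - intros y Hy. apply (isd_mult (fun s => Lf (x s)) (fun s => exp (1/50 * s))); [|apply isd_expk].
      apply (isd_Lf x (dr y)). intros i Hi. apply Hder; auto.
    - intros y Hy. destruct (Hev y Hy) as [_ [_ E3]].
      assert (Hsx : simplex7 (x y)) by (split; [apply Hnn; auto | apply Hsum; auto]).
      pose proof (L_decay eps (x y) ltac:(lra) Hsx E3) as K. cbv zeta in K.
      pose proof (exp_pos (1/50 * y)).
      assert (Eq : dr y 0%nat + dr y 1%nat + dr y 2%nat + dr y 3%nat +
          ((dr y 4%nat * x y 5%nat + x y 4%nat * dr y 5%nat) * x y 6%nat + x y 4%nat * x y 5%nat * dr y 6%nat)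
          = x y 0%nat * (Ux eps (x y) 0 - avg_payoff eps (x y)) + x y 1%nat * (Ux eps (x y) 1 - avg_payoff eps (x y))
            + x y 2%nat * (Ux eps (x y) 2 - avg_payoff eps (x y)) + x y 3%nat * (Ux eps (x y) 3 - avg_payoff eps (x y))
            + x y 4%nat * x y 5%nat * x y 6%nat * ((Ux eps (x y) 4 - avg_payoff eps (x y))
               + (Ux eps (x y) 5 - avg_payoff eps (x y)) + (Ux eps (x y) 6 - avg_payoff eps (x y)))).
      { unfold dr, replicator. ring. }
      rewrite Eq. set (D := x y 0%nat * _ + _ + _ + _ + _) in *.
      replace (D * exp (1/50 * y) + Lf (x y) * (1/50 * exp (1/50 * y))) with ((D + 1/50 * Lf (x y)) * exp (1/50 * y)) by ring.
      assert (D + 1/50 * Lf (x y) <= 0) by lra. nra.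
    - apply (fl_mult (at_right T) (fun s => Lf (x s)) (fun s => exp (1/50 * s))).
      apply (fl_Lf (at_right T) x (x T)). intros; apply Hrc; auto.
      apply loc_right. apply Hexpc. }
  exists d. split; auto. intros s Hs. destruct (Req_dec s T) as [->|Hne].
  - split; [split|]; auto.
  - assert (Hs' : T < s < T + d) by lra. split; [split|].
    + intros i Hi. apply Hnn; auto.
    + apply Hsum; auto.
    + pose proof (HPhi s Hs'). lra.
Qed.

Lemma Lf_nonneg z : simplex7 z -> 0 <= Lf z.
Proof. intros Hz. destruct (simplex_expl z Hz) as (Z0&Z1&Z2&Z3&Z4&Z5&Z6&Zs). unfold Lf.
  assert (0 <= z 4%nat * z 5%nat * z 6%nat) by (apply Rmult_le_pos; [apply Rmult_le_pos|]; lra). lra. Qed.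

Lemma Lf_exp z t : simplex7 z -> 0 <= t -> Lf z <= Lf z * exp (1/50 * t).
Proof. intros Hz Ht. pose proof (Lf_nonneg z Hz). pose proof (exp_ge1 (1/50*t) ltac:(lra)). nra. Qed.

Theorem proposition8 :
  exists eps0, 0 < eps0 /\
    forall eps, 0 < eps -> eps < eps0 ->
      asymptotically_stable eps Gamma567.
Proof.
  exists (1/200). split; [lra|]. intros eps He0 He1. split.
  - intros V HV. destruct (leb V HV) as [rho [Hrho Hleb]].
    set (eta := Rmin (1/20000) (rho^2/10)).
    assert (Heta1 : eta <= 1/20000) by apply Rmin_l.
    assert (Heta2 : eta <= rho^2/10) by apply Rmin_r.
    assert (Heta0 : 0 < eta) by (apply Rmin_pos; [lra| pose proof (pow_lt rho 2 Hrho); lra]).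
    assert (HWV : forall z, simplex7 z -> Lf z < eta -> V z).
    { intros z Hz HL. destruct (prox z eta Hz ltac:(lra) ltac:(lra)) as [y [Hy Hzy]].
      apply (Hleb y Hy z Hz). rewrite sq7_sym. pose proof (pow_lt rho 2 Hrho). lra. }
    exists (fun z => simplex7 z /\ Lf z < eta). split; [|split].
    + apply W_nbhd. lra.
    + intros z Hz [_ HL]. apply HWV; auto.
    + intros x Hsol Hx0 [_ HL0] t Ht.
      destruct (dyn eps x ltac:(lra) Hsol Hx0 ltac:(lra) t Ht) as [Hxt Hdec].
      apply HWV; auto. pose proof (Lf_exp (x t) t Hxt Ht). lra.
  - exists (fun z => simplex7 z /\ Lf z < 1/20000). split.
    + apply W_nbhd. lra.
    + intros x Hsol Hx0 [_ HL0] e He.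
      exists (1/(40*e^2)). intros t Ht.
      assert (HT : 0 < 1/(40*e^2)) by (apply Rdiv_lt_0_compat; [lra|]; pose proof (pow_lt e 2 He); lra).
      assert (Ht0 : 0 <= t) by lra.
      destruct (dyn eps x ltac:(lra) Hsol Hx0 ltac:(lra) t Ht0) as [Hxt Hdec].
      pose proof (Lf_nonneg _ Hxt) as HLn.
      assert (Hexp : 1 + 1/50*t <= exp (1/50*t)) by (pose proof (exp_ineq1 (1/50*t) ltac:(lra)); lra).
      assert (HLt : Lf (x t) * (1/50*t) <= 1/20000) by nra.
      assert (He2 : 0 < e^2) by (apply pow_lt; lra).
      assert (Hte : t * (40 * e^2) >= 1).
      { apply Rle_ge. apply (Rmult_le_reg_r (/(40*e^2))). apply Rinv_0_lt_compat; lra.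
        rewrite Rmult_assoc, Rinv_r by lra. unfold Rdiv in Ht. lra. }
      set (eta := Rmin (1/10000) (e^2/10)).
      assert (HL1 : Lf (x t) <= e^2/10) by nra.
      assert (HL2 : Lf (x t) <= 1/10000) by (pose proof (Lf_exp (x t) t Hxt Ht0); lra).
      assert (HLeta : Lf (x t) <= eta) by (unfold eta, Rmin; destruct Rle_dec; lra).
      assert (Heta : eta <= e^2/10) by apply Rmin_r.
      destruct (prox (x t) eta Hxt HLeta (Rmin_l _ _)) as [y [Hy Hsq]].
      exists y. split; auto. apply dist_of_sq; auto. lra.
Qed.
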